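(* Let $M$ be a connected matroid whose ground set is $D_1\cup D_2\cup\{e\}$, where $e\notin D_1\cup D_2$ and $D_1,D_2$ are skew circuits of $M$. Then either $M$ has a $2$-element cocircuit avoiding $e$, or $M\cong S((U_{k-2,k};e),(U_{l-2,l};e))$ for some integers $k\ge3$ and $l\ge 3$.
   Context: Two sets $X,Y$ in a matroid with rank function $r$ are skew if $r(X)+r(Y)=r(X\cup Y)$. $U_{r,n}$ is the uniform matroid of rank $r$ on $n$ elements. Series connection: if $M_1,M_2$ are matroids with $E(M_1)\cap E(M_2)=\{p\}$ and $p$ is neither a loop nor a coloop of either, then $S((M_1;p),(M_2;p))$ is the matroid on $E(M_1)\cup E(M_2)$ whose circuits are the circuits of $M_1$ avoiding $p$, the circuits of $M_2$ avoiding $p$, and all sets $C_1\cup C_2$ where $C_i$ is a circuit of $M_i$ containing $p$ for $i=1,2$. *)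

(* Defs.v *)
(* Matroids on a finite type T (ground set = [set: T]),
   given by a rank function. *)
From mathcomp Require Import all_boot.
Set Implicit Arguments. Unset Strict Implicit. Unset Printing Implicit Defensive.

Record matroid (T : finType) := Matroid {
  rk : {set T} -> nat;
  rk_le_card : forall X, rk X <= #|X|;
  rk_mono : forall X Y : {set T}, X \subset Y -> rk X <= rk Y;
  rk_submod : forall X Y : {set T}, rk (X :|: Y) + rk (X :&: Y) <= rk X + rk Y
}.

Section Generic.
Variable T : finType.
Variable r : {set T} -> nat.

Definition indep (X : {set T}) : bool := r X == #|X|.
Definition circuit (C : {set T}) : bool :=
  ~~ indep C && [forall D : {set T}, (D \proper C) ==> indep D].

Definition dual_rk (X : {set T}) : nat := #|X| + r (~: X) - r [set: T].
End Generic.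

Definition is_circuit T (M : matroid T) (C : {set T}) := circuit (rk M) C.
Definition is_cocircuit T (M : matroid T) (C : {set T}) := circuit (dual_rk (rk M)) C.

Definition skew T (M : matroid T) (X Y : {set T}) : Prop :=
  rk M X + rk M Y = rk M (X :|: Y).

Definition connected T (M : matroid T) : Prop :=
  forall x y : T, x != y -> exists C, [/\ is_circuit M C, x \in C & y \in C].

Definition urk (n : nat) (T : finType) (X : {set T}) : nat := minn n #|X|.

(* Series connection of N1 on option A and N2 on option B, both with
   basepoint p = None; ground set option (A + B), with p = None. Given by
   its circuits, as in the definition. *)
Definition embl (A B : Type) (x : option A) : option (A + B) := omap inl x.
Definition embr (A B : Type) (x : option B) : option (A + B) := omap inr x.

Definition series_circuit (A B : finType)
    (c1 : {set option A} -> bool) (c2 : {set option B} -> bool)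
    (C : {set option (A + B)}) : Prop :=
  (exists C1, [/\ c1 C1, None \notin C1 & C = [set embl B x | x in C1]]) \/
  (exists C2, [/\ c2 C2, None \notin C2 & C = [set embr A x | x in C2]]) \/
  (exists C1 C2, [/\ c1 C1, c2 C2, None \in C1, None \in C2 &
        C = [set embl B x | x in C1] :|: [set embr A x | x in C2]]).

(* M is isomorphic to S((U_{k-2,k};p),(U_{l-2,l};p)): a bijection of ground
   sets carrying circuits exactly onto circuits.  U_{k-2,k} lives on
   option 'I_(k-1) (k elements, basepoint None). *)
Definition iso_series_uniform T (M : matroid T) (k l : nat) : Prop :=
  exists f : T -> option ('I_(k.-1) + 'I_(l.-1)),
    bijective f /\
    forall C : {set T},
      is_circuit M C <->
      series_circuit (circuit (@urk (k - 2) (option 'I_(k.-1))))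
                     (circuit (@urk (l - 2) (option 'I_(l.-1))))
                     [set f x | x in C].

(* Main.v *)
Require Import Defs.
From mathcomp Require Import all_boot.
From mathcomp Require Import zify.
From Stdlib Require Import Classical.
Set Implicit Arguments. Unset Strict Implicit. Unset Printing Implicit Defensive.

Section Gen.
Variables (T : finType) (M : matroid T).
Local Notation r := (rk M).

Lemma rk0 : r set0 = 0.
Proof. have := rk_le_card M set0. by rewrite cards0 leqn0 => /eqP. Qed.

Lemma rkU (X Y : {set T}) : r (X :|: Y) <= r X + r Y.
Proof. have := rk_submod M X Y. lia. Qed.

Lemma rk_add1 x (X : {set T}) : r (x |: X) <= (r X).+1.
Proof. have := rkU [set x] X. have := rk_le_card M [set x]. rewrite cards1. lia. Qed.

Lemma indep_sub (X Y : {set T}) : indep r Y -> X \subset Y -> indep r X.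
Proof.
move=> /eqP hY sXY. apply/eqP.
have h1 : X :|: (Y :\: X) = Y.
  apply/setP=> t; rewrite !inE; case h: (t \in X) => //=.
  by rewrite (subsetP sXY _ h).
have := rkU X (Y :\: X). rewrite h1.
have := rk_le_card M (Y :\: X). rewrite cardsDS //.
have := rk_le_card M X. have := subset_leq_card sXY. lia.
Qed.

Lemma circ_dep (C : {set T}) : is_circuit M C -> r C < #|C|.
Proof. case/andP=> /eqP h _. have := rk_le_card M C. lia. Qed.

Lemma circ_proper (C D : {set T}) : is_circuit M C -> D \proper C -> indep r D.
Proof. case/andP=> _ /forallP h hD. exact: (implyP (h D) hD). Qed.

Lemma circ_rm (C : {set T}) z : is_circuit M C -> z \in C ->
  r (C :\ z) = #|C| - 1 /\ r C = #|C| - 1.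
Proof.
move=> hC hz. have hp : C :\ z \proper C by apply: properD1.
have /eqP hi := circ_proper hC hp. rewrite (cardsD1 z C) hz in hi *.
have := circ_dep hC. have := rk_mono M (subD1set C z). rewrite (cardsD1 z C) hz. lia.
Qed.

Lemma circ_cl (C : {set T}) x (W : {set T}) : is_circuit M C -> x \in C -> C :\ x \subset W -> r (x |: W) = r W.
Proof.
move=> hC hx hs. have [h1 h2] := circ_rm hC hx.
have := rk_submod M C W.
have h3 : r (C :\ x) <= r (C :&: W) by apply: rk_mono; rewrite subsetI subD1set hs.
have h4 : r (x |: W) <= r (C :|: W).
  apply: rk_mono; apply/subsetP => t; rewrite !inE => /orP[/eqP->|->].
    by rewrite hx. by rewrite orbT.
have h5 : r W <= r (x |: W) by apply: rk_mono; apply: subsetUr.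
lia.
Qed.

Lemma cl_mono x (W W' : {set T}) : r (x |: W) = r W -> W \subset W' -> r (x |: W') = r W'.
Proof.
move=> h hs. have := rk_submod M (x |: W) W'.
have e1 : (x |: W) :|: W' = x |: W'.
  apply/setP=> t; rewrite !inE. case: (t == x)=>//=.
  case: (boolP (t \in W)) => //= hw. by rewrite (subsetP hs _ hw).
rewrite e1.
have h2 : r W <= r ((x |: W) :&: W') by apply: rk_mono; rewrite subsetI subsetUr hs.
have h3 : r W' <= r (x |: W') by apply: rk_mono; apply: subsetUr.
lia.
Qed.

Lemma noncoloop (C : {set T}) z : is_circuit M C -> z \in C -> r (~: [set z]) = r setT.
Proof.
move=> hC hz.
have hs : C :\ z \subset ~: [set z] by apply/subsetP=> t; rewrite !inE => /andP[].
have := circ_cl hC hz hs.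
have -> : z |: ~: [set z] = setT by apply/setP=> t; rewrite !inE; case: (t == z).
done.
Qed.

Lemma cocirc2 x z : x != z -> r (~:[set x]) = r setT -> r (~:[set z]) = r setT ->
  r (~:[set x; z]) < r setT -> is_cocircuit M [set x; z].
Proof.
move=> hxz hx hz hlt. apply/andP; split.
  rewrite /indep /dual_rk cards2 hxz. apply/eqP. lia.
apply/forallP => D; apply/implyP => /properP [hsub [t ht htD]].
have hT X : r (~: X) <= r setT by apply: rk_mono; apply: subsetT.
suff [w [hw hDw]] : exists w, r (~:[set w]) = r setT /\ D \subset [set w].
  rewrite /indep /dual_rk. apply/eqP.
  have := rk_mono M (etrans (setCS _ _) hDw). have := hT D. lia.
move: ht; rewrite !inE => /orP[/eqP ht | /eqP ht]; subst t.
  exists z; split => //; apply/subsetP => u hu.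
  have := subsetP hsub _ hu; rewrite !inE => /orP[/eqP hux|//].
  by subst u; rewrite hu in htD.
exists x; split => //; apply/subsetP => u hu.
have := subsetP hsub _ hu; rewrite !inE => /orP[//|/eqP hux].
by subst u; rewrite hu in htD.
Qed.

Lemma conn_nonloop x y : connected M -> x != y -> r [set x] = 1.
Proof.
move=> hc hxy. have [C [hC hx hy]] := hc x y hxy.
have hp : [set x] \proper C.
  apply/properP; split; first by rewrite sub1set.
  by exists y => //; rewrite inE eq_sym.
have /eqP := circ_proper hC hp. by rewrite cards1.
Qed.

End Gen.

Record Setup (T : finType) (M : matroid T) (D1 D2 : {set T}) (e : T) : Prop := {
  st_cov : forall t, t != e -> t \notin D1 -> t \in D2;
  st_e1 : e \notin D1;
  st_e2 : e \notin D2;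
  st_dis : forall t, t \in D1 -> t \notin D2;
  st_c1 : is_circuit M D1;
  st_c2 : is_circuit M D2;
  st_sk : rk M D1 + rk M D2 = rk M (D1 :|: D2);
  st_n1 : 2 <= #|D1|;
  st_n2 : 2 <= #|D2|;
  st_rE : rk M setT = #|D1| + #|D2| - 2;
  st_B1 : forall x z, x \in D1 -> z \in D1 -> x != z -> rk M (~:[set x; z]) = rk M setT;
  st_B2 : forall x z, x \in D2 -> z \in D2 -> x != z -> rk M (~:[set x; z]) = rk M setT
}.

Lemma setup_swap T (M : matroid T) D1 D2 e : Setup M D1 D2 e -> Setup M D2 D1 e.
Proof.
case=> hcov he1 he2 hdis hc1 hc2 hsk hn1 hn2 hrE hB1 hB2; split => //.
- move=> t hte ht2; apply/negPn/negP => ht1.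
  by rewrite (hcov t hte ht1) in ht2.
- move=> t ht2; apply/negP => ht1. by have := hdis t ht1; rewrite ht2.
- by rewrite setUC addnC.
- by rewrite hrE addnC.
Qed.

Lemma cardUdis T (A B : {set T}) : (forall t, t \in A -> t \notin B) ->
  #|A :|: B| = #|A| + #|B|.
Proof.
move=> hd. have := cardsUI A B.
suff -> : A :&: B = set0 by rewrite cards0 addn0.
apply/setP=> t; rewrite !inE; case h: (t \in A) => //=. exact/negbTE/hd.
Qed.

Section Main.
Variables (T : finType) (M : matroid T) (D1 D2 : {set T}) (e : T).
Hypothesis S : Setup M D1 D2 e.
Local Notation r := (rk M).

Lemma skewAB (A B : {set T}) : A \subset D1 -> B \subset D2 -> r (A :|: B) = r A + r B.
Proof.
move=> sA sB. have hdis := st_dis S.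
have e1 : (A :|: D2) :|: D1 = D1 :|: D2.
  apply/setP=> t; rewrite !inE; case hA: (t \in A); first by rewrite (subsetP sA _ hA).
  by rewrite /= orbC.
have e2 : (A :|: D2) :&: D1 = A.
  apply/setP=> t; rewrite !inE; case hA: (t \in A); first by rewrite (subsetP sA _ hA).
  case h1: (t \in D1); last by rewrite andbF.
  by rewrite (negbTE (hdis _ h1)).
have e3 : (A :|: B) :|: D2 = A :|: D2.
  apply/setP=> t; rewrite !inE; case hB: (t \in B); last by rewrite orbF.
  by rewrite (subsetP sB _ hB) !orbT.
have e4 : (A :|: B) :&: D2 = B.
  apply/setP=> t; rewrite !inE; case hB: (t \in B); first by rewrite (subsetP sB _ hB) orbT.
  rewrite orbF; case hA: (t \in A) => //=. exact/negbTE/hdis/(subsetP sA).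
have := rk_submod M (A :|: D2) D1. rewrite e1 e2.
have := rk_submod M (A :|: B) D2. rewrite e3 e4.
have := rkU M A B. have := st_sk S. lia.
Qed.

Lemma rD1 : r D1 = #|D1| - 1.
Proof.
have := st_n1 S => h. have /card_gt0P [d hd] : 0 < #|D1| by lia.
by have [] := circ_rm (st_c1 S) hd.
Qed.

Lemma rD2 : r D2 = #|D2| - 1.
Proof.
have := st_n2 S => h. have /card_gt0P [d hd] : 0 < #|D2| by lia.
by have [] := circ_rm (st_c2 S) hd.
Qed.

Lemma indepAB (A B : {set T}) : A \proper D1 -> B \proper D2 -> indep r (A :|: B).
Proof.
move=> pA pB. have sA := proper_sub pA. have sB := proper_sub pB.
apply/eqP. rewrite skewAB // cardUdis.
  by rewrite (eqP (circ_proper (st_c1 S) pA)) (eqP (circ_proper (st_c2 S) pB)).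
move=> t /(subsetP sA) h1; apply/negP => /(subsetP sB) h2.
by have := st_dis S h1; rewrite h2.
Qed.

Lemma circ_noe (C : {set T}) : is_circuit M C -> e \notin C -> C = D1 \/ C = D2.
Proof.
move=> hC heC.
have hsub X : is_circuit M X -> X \subset C -> X = C.
  move=> hX; rewrite subEproper => /orP[/eqP //| hp].
  have /eqP := circ_proper hC hp. have := circ_dep hX. lia.
case: (boolP (D1 \subset C)) => h1; first by left; rewrite (hsub _ (st_c1 S) h1).
case: (boolP (D2 \subset C)) => h2; first by right; rewrite (hsub _ (st_c2 S) h2).
exfalso.
have p1 : C :&: D1 \proper D1.
  rewrite properE subsetIr /=; apply/negP => h; move/negP: h1; apply.
  exact: (subset_trans h (subsetIl _ _)).
have p2 : C :&: D2 \proper D2.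
  rewrite properE subsetIr /=; apply/negP => h; move/negP: h2; apply.
  exact: (subset_trans h (subsetIl _ _)).
have eC : (C :&: D1) :|: (C :&: D2) = C.
  apply/setP => t; rewrite !inE; case ht: (t \in C) => //=.
  case h: (t \in D1) => //=. apply: (st_cov S); last by rewrite h.
  by apply/eqP => hte; subst t; rewrite ht in heC.
have := indepAB p1 p2. rewrite eC => /eqP. have := circ_dep hC. lia.
Qed.

Lemma key_contra x z : x \in D1 -> z \in D1 -> x != z ->
  r (e |: ((D1 :\: [set x; z]) :|: D2)) = r ((D1 :\: [set x; z]) :|: D2) -> False.
Proof.
move=> hx hz hxz h.
have hs : ~: [set x; z] \subset e |: ((D1 :\: [set x; z]) :|: D2).
  apply/subsetP => t; rewrite !inE negb_or => /andP[htx htz].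
  case: (t =P e) => //= /eqP hte. rewrite htx htz /=.
  case h1: (t \in D1) => //=. by apply: (st_cov S); rewrite ?h1.
have := rk_mono M hs. rewrite h skewAB ?subsetDl //.
have p : D1 :\: [set x; z] \proper D1.
  apply/properP; split; first exact: subsetDl.
  by exists x => //; rewrite !inE eqxx.
rewrite (eqP (circ_proper (st_c1 S) p)) cardsDS; last by rewrite subUset !sub1set hx hz.
rewrite cards2 hxz rD2 (st_B1 S hx hz hxz) (st_rE S).
have := st_n1 S. have := st_n2 S. lia.
Qed.

Lemma circ_e_side (C : {set T}) x z : is_circuit M C -> e \in C -> x \in D1 -> x \notin C ->
  z \in D1 -> z \notin C -> x = z.
Proof.
move=> hC he hx hxC hz hzC. apply/eqP/negPn/negP => hxz.
apply: (key_contra hx hz hxz). apply: (circ_cl hC he).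
apply/subsetP => t; rewrite !inE => /andP[hte htC].
case h1: (t \in D1); last by rewrite (st_cov S) ?h1 ?orbT.
rewrite andbT; apply/orP; left. apply/negP => /orP[/eqP htx|/eqP htz]; subst t.
  by rewrite htC in hxC. by rewrite htC in hzC.
Qed.

Lemma indep_rm_e x y : x \in D1 -> y \in D2 -> indep r ((~:[set x; y]) :\ e).
Proof.
move=> hx hy. apply: (indep_sub (indepAB (properD1 hx) (properD1 hy))).
apply/subsetP => t; rewrite !inE negb_or => /andP[hte /andP[htx hty]].
rewrite htx hty /=. case h1: (t \in D1) => //=. by apply: (st_cov S); rewrite ?h1.
Qed.

Lemma indep_rm_1 x y t : x \in D1 -> y \in D2 -> t \in D1 -> t != x ->
  indep r ((~:[set x; y]) :\ t).
Proof.
move=> hx hy ht htx.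
set W := (D1 :\: [set x; t]) :|: (D2 :\ y).
have p : D1 :\: [set x; t] \proper D1.
  apply/properP; split; first exact: subsetDl.
  by exists x => //; rewrite !inE eqxx.
have hW := indepAB p (properD1 hy).
have heW : e \notin W.
  rewrite !inE (negbTE (st_e1 S)) (negbTE (st_e2 S)). by rewrite !andbF.
have hne : r (e |: W) != r W.
  apply/eqP => h. apply: (key_contra hx ht). by rewrite eq_sym.
  apply: (cl_mono h). apply/subsetP => u; rewrite !inE => /orP[->//|/andP[_ ->]].
  by rewrite orbT.
have hi : indep r (e |: W).
  apply/eqP. rewrite cardsU1 heW. have hW' : r W = #|W| := eqP hW. move: hW'. move/eqP: hne.
  have := rk_add1 M e W. have := rk_mono M (subsetUr [set e] W). lia.
apply: (indep_sub hi). apply/subsetP => u; rewrite !inE negb_or.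
move=> /andP[hut /andP[hux huy]]. case: (u =P e) => //= /eqP hue.
rewrite negb_or hux hut huy /=. case h1: (u \in D1) => //=. by apply: (st_cov S); rewrite ?h1.
Qed.

End Main.

Lemma cardT_setup T (M : matroid T) D1 D2 e : Setup M D1 D2 e -> #|T| = #|D1| + #|D2| + 1.
Proof.
move=> S. rewrite -cardsT.
have -> : [set: T] = e |: (D1 :|: D2).
  apply/setP => t; rewrite !inE. case: (t =P e) => //= /eqP hte.
  case h1: (t \in D1) => //=. by rewrite (st_cov S) ?h1.
rewrite cardsU1 !inE (negbTE (st_e1 S)) (negbTE (st_e2 S)) cardUdis; last exact: st_dis S.
simpl. lia.
Qed.

Lemma charC T (M : matroid T) D1 D2 e (S : Setup M D1 D2 e) (C : {set T}) :
  is_circuit M C <->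
  [\/ C = D1, C = D2 | exists x y, [/\ x \in D1, y \in D2 & C = ~:[set x; y]]].
Proof.
have S' := setup_swap S.
split.
- move=> hC. case: (boolP (e \in C)) => heC; last first.
    by case: (circ_noe S hC heC) => ->; [apply: Or31 | apply: Or32].
  have nsub X : is_circuit M X -> e \notin X -> ~~ (X \subset C).
    move=> hX heX; apply/negP => hs.
    have hp : X \proper C by apply/properP; split => //; exists e.
    have /eqP := circ_proper hC hp. have := circ_dep hX. lia.
  have /subsetPn [x hx hxC] := nsub _ (st_c1 S) (st_e1 S).
  have /subsetPn [y hy hyC] := nsub _ (st_c2 S) (st_e2 S).
  apply: Or33; exists x, y; split => //.
  apply/setP => t; rewrite !inE negb_or.
  case htC: (t \in C).
    apply/esym/andP; split; apply/eqP => h; subst t.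
      by rewrite htC in hxC. by rewrite htC in hyC.
  apply/esym/negbTE/negP => /andP[htx hty].
  have hte : t != e by apply/eqP => h; subst t; rewrite htC in heC.
  case h1: (t \in D1).
    have := circ_e_side S hC heC hx hxC h1 (negbT htC).
    by move=> h; subst; rewrite eqxx in htx.
  have h2 := st_cov S hte (negbT h1).
  have := circ_e_side S' hC heC hy hyC h2 (negbT htC).
  by move=> h; subst; rewrite eqxx in hty.
- case=> [->|->|[x [y [hx hy ->]]]]; [exact: st_c1 S | exact: st_c2 S|].
  have hxy : x != y by apply/eqP => h; subst; have := st_dis S hx; rewrite hy.
  apply/andP; split.
    rewrite /indep; apply/negP => /eqP h.
    have := cardsC [set x; y]; rewrite cards2 hxy.
    have := rk_mono M (subsetT (~:[set x; y])). rewrite (st_rE S) (cardT_setup S).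
    have := st_n1 S. have := st_n2 S. lia.
  apply/forallP => D; apply/implyP => /properP [hsub [t ht htD]].
  suff hi : indep (rk M) ((~:[set x; y]) :\ t).
    apply: (indep_sub hi). apply/subsetP => u hu.
    rewrite in_setD1 (subsetP hsub _ hu) andbT.
    by apply/eqP => h; subst; rewrite hu in htD.
  case: (t =P e) => [->|/eqP hte]; first exact (indep_rm_e S hx hy).
  move: ht; rewrite !inE negb_or => /andP[htx hty].
  case h1: (t \in D1); first exact (indep_rm_1 S hx hy h1 htx).
  have h2 := st_cov S hte (negbT h1).
  have -> : [set x; y] = [set y; x] by apply/setP=> u; rewrite !inE orbC.
  exact (indep_rm_1 S' hy hx h2 hty).
Qed.

Lemma urk_circ m (U : finType) (C : {set U}) : circuit (@urk m U) C <-> #|C| = m.+1.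
Proof.
rewrite /circuit /indep /urk. split.
- case/andP => h1 /forallP h2.
  have hgt : m < #|C| by move: h1; apply: contraNT; rewrite -leqNgt => h; apply/eqP; lia.
  case: (ltngtP #|C| m.+1) => // hc; first lia.
  have /card_gt0P [z hz] : 0 < #|C| by lia.
  have := implyP (h2 (C :\ z)) (properD1 hz). rewrite (cardsD1 z C) hz in hc. lia.
- move=> hc; apply/andP; split; first by rewrite hc; apply/eqP; lia.
  apply/forallP => D; apply/implyP => hD. have := proper_card hD. rewrite hc => h.
  apply/eqP; lia.
Qed.

Lemma mem_embl (A B : finType) (X : {set option A}) (z : option (A + B)) :
  (z \in [set embl B x | x in X]) =
  match z with None => None \in X | Some (inl a) => Some a \in X | Some (inr _) => false end.
Proof.
apply/imsetP/idP.
- case=> x hx ->; case: x hx => //=.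
- case: z => [[a|b]|] //= h.
    by exists (Some a).
  by exists None.
Qed.

Lemma mem_embr (A B : finType) (X : {set option B}) (z : option (A + B)) :
  (z \in [set embr A x | x in X]) =
  match z with None => None \in X | Some (inr b) => Some b \in X | Some (inl _) => false end.
Proof.
apply/imsetP/idP.
- case=> x hx ->; case: x hx => //=.
- case: z => [[a|b]|] //= h.
    by exists (Some b).
  by exists None.
Qed.

Lemma opt_full (A : finType) (X : {set option A}) : #|X| = #|A| -> None \notin X -> X = [set~ None].
Proof.
move=> hc hN. apply/eqP; rewrite eqEcard cardsC1 card_option hc leqnn andbT.
apply/subsetP => u hu; rewrite !inE; apply/eqP => h; subst u; by rewrite hu in hN.
Qed.

Lemma opt_miss (A : finType) (X : {set option A}) : #|X| = #|A| -> None \in X ->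
  exists a, X = [set~ Some a].
Proof.
move=> hc hN. have := cardsC X. rewrite card_option hc => h.
have /cards1P [w hw] : #|~: X| == 1 by apply/eqP; lia.
case: w hw => [a|] hw.
  exists a. by rewrite -hw setCK.
have : None \in ~: X by rewrite hw inE.
by rewrite inE hN.
Qed.

Lemma mem_imset_can (U V : finType) (f : U -> V) (g : V -> U) (X : {set U}) z :
  cancel f g -> cancel g f -> (z \in f @: X) = (g z \in X).
Proof.
move=> fK gK. apply/imsetP/idP.
  by case=> t ht ->; rewrite fK.
by move=> h; exists (g z) => //; rewrite gK.
Qed.

Section Iso.
Variables (T : finType) (M : matroid T) (D1 D2 : {set T}) (e d1 d2 : T).
Hypothesis S : Setup M D1 D2 e.
Hypotheses (hd1 : d1 \in D1) (hd2 : d2 \in D2).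

Definition fI (t : T) : option ('I_#|D1| + 'I_#|D2|) :=
  if t \in D1 then Some (inl (enum_rank_in hd1 t))
  else if t \in D2 then Some (inr (enum_rank_in hd2 t)) else None.

Definition gI (o : option ('I_#|D1| + 'I_#|D2|)) : T :=
  match o with None => e | Some (inl i) => enum_val i | Some (inr j) => enum_val j end.

Lemma nD1 (b : 'I_#|D2|) : (enum_val b \in D1) = false.
Proof. apply/negP => h; have := st_dis S h; by rewrite enum_valP. Qed.

Lemma diffD12 (a : 'I_#|D1|) (b : 'I_#|D2|) : (enum_val a == enum_val b) = false.
Proof. apply/negbTE/eqP => h. have := st_dis S (enum_valP a). by rewrite h enum_valP. Qed.

Lemma fK : cancel fI gI.
Proof.
move=> t; rewrite /fI /gI; case: ifP => h1; first by rewrite enum_rankK_in.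
case: ifP => h2; first by rewrite enum_rankK_in.
apply/eqP; apply/negPn/negP => hte. have := st_cov S (t := t). rewrite eq_sym hte h1 h2.
by move=> /(_ isT isT).
Qed.

Lemma gK : cancel gI fI.
Proof.
case=> [[i|j]|] /=; rewrite /fI.
- by rewrite enum_valP enum_valK_in.
- by rewrite nD1 enum_valP enum_valK_in.
- by rewrite (negbTE (st_e1 S)) (negbTE (st_e2 S)).
Qed.

Lemma imD1 : fI @: D1 = [set embl 'I_#|D2| x | x in [set~ None]].
Proof.
apply/setP => z; rewrite (mem_imset_can _ _ fK gK) mem_embl.
case: z => [[a|b]|] /=; rewrite ?inE ?enum_valP ?nD1 //.
by rewrite (negbTE (st_e1 S)).
Qed.

Lemma imD2 : fI @: D2 = [set embr 'I_#|D1| x | x in [set~ None]].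
Proof.
apply/setP => z; rewrite (mem_imset_can _ _ fK gK) mem_embr.
case: z => [[a|b]|] /=; rewrite ?inE ?enum_valP //.
  by apply/negbTE/negP => h; have := st_dis S (enum_valP a); rewrite h.
by rewrite (negbTE (st_e2 S)).
Qed.

Lemma imXY (i : 'I_#|D1|) (j : 'I_#|D2|) : fI @: (~: [set enum_val i; enum_val j]) =
  [set embl 'I_#|D2| x | x in [set~ Some i]] :|: [set embr 'I_#|D1| x | x in [set~ Some j]].
Proof.
apply/setP => z; rewrite inE (mem_imset_can _ _ fK gK) mem_embl mem_embr.
case: z => [[a|b]|] /=; rewrite ?inE.
- have hS : (Some a == Some i) = (a == i) by apply/eqP/eqP => [[]|->].
  by rewrite diffD12 !orbF (inj_eq enum_val_inj) hS.
- have hS : (Some b == Some j) = (b == j) by apply/eqP/eqP => [[]|->].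
  by rewrite eq_sym diffD12 /= (inj_eq enum_val_inj) hS.
- have h1 : (e == enum_val i) = false.
    by apply/negbTE/eqP => h; have := st_e1 S; rewrite h enum_valP.
  have h2 : (e == enum_val j) = false.
    by apply/negbTE/eqP => h; have := st_e2 S; rewrite h enum_valP.
  by rewrite h1 h2.
Qed.

Lemma iso_main : iso_series_uniform M (#|D1|.+1) (#|D2|.+1).
Proof.
have n1 := st_n1 S. have n2 := st_n2 S.
exists fI; split; first by exists gI; [exact fK | exact gK].
move=> C. rewrite (charC S C).
have c1 (X : {set option 'I_#|D1|}) : circuit (@urk (#|D1|.+1 - 2) _) X <-> #|X| = #|D1|.
  rewrite urk_circ. have -> : (#|D1|.+1 - 2).+1 = #|D1| by lia. done.
have c2 (X : {set option 'I_#|D2|}) : circuit (@urk (#|D2|.+1 - 2) _) X <-> #|X| = #|D2|.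
  rewrite urk_circ. have -> : (#|D2|.+1 - 2).+1 = #|D2| by lia. done.
split.
- case=> [->|->|[x [y [hx hy ->]]]].
  + left. exists [set~ None]. split.
    * by apply/c1; rewrite cardsC1 card_option card_ord.
    * by rewrite !inE.
    * exact: imD1.
  + right; left. exists [set~ None]. split.
    * by apply/c2; rewrite cardsC1 card_option card_ord.
    * by rewrite !inE.
    * exact: imD2.
  + right; right. pose i := enum_rank_in hd1 x. pose j := enum_rank_in hd2 y.
    have -> : x = enum_val i by rewrite /i enum_rankK_in.
    have -> : y = enum_val j by rewrite /j enum_rankK_in.
    exists [set~ Some i], [set~ Some j]. split.
    * by apply/c1; rewrite cardsC1 card_option card_ord.
    * by apply/c2; rewrite cardsC1 card_option card_ord.
    * by rewrite !inE.
    * by rewrite !inE.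
    * exact: imXY.
- case=> [[C1 [h1 hN hE]]|[[C2 [h2 hN hE]]|[C1 [C2 [h1 h2 hN1 hN2 hE]]]]].
  + have {}h1 : #|C1| = #|'I_#|D1| | by rewrite card_ord; apply/c1.
    rewrite (opt_full h1 hN) -imD1 in hE. apply: Or31. exact: (imset_inj (can_inj fK) hE).
  + have {}h2 : #|C2| = #|'I_#|D2| | by rewrite card_ord; apply/c2.
    rewrite (opt_full h2 hN) -imD2 in hE. apply: Or32. exact: (imset_inj (can_inj fK) hE).
  + have {}h1 : #|C1| = #|'I_#|D1| | by rewrite card_ord; apply/c1.
    have {}h2 : #|C2| = #|'I_#|D2| | by rewrite card_ord; apply/c2.
    have [i hi] := opt_miss h1 hN1. have [j hj] := opt_miss h2 hN2.
    rewrite hi hj -imXY in hE. apply: Or33. exists (enum_val i), (enum_val j).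
    split; [exact: enum_valP | exact: enum_valP | exact: (imset_inj (can_inj fK) hE)].
Qed.

End Iso.

Theorem lemma2p2 (T : finType) (M : matroid T) (D1 D2 : {set T}) (e : T) :
  connected M ->
  e \notin D1 :|: D2 ->
  D1 :|: D2 :|: [set e] = [set: T] ->
  is_circuit M D1 -> is_circuit M D2 -> skew M D1 D2 ->
  (exists C : {set T}, [/\ is_cocircuit M C, #|C| = 2 & e \notin C]) \/
  (exists k l : nat, [/\ 3 <= k, 3 <= l & iso_series_uniform M k l]).
Proof.
move=> hcon he hU hc1 hc2 hsk.
have he1 : e \notin D1 by move: he; rewrite inE negb_or => /andP[].
have he2 : e \notin D2 by move: he; rewrite inE negb_or => /andP[].
have hcov : forall t, t != e -> t \notin D1 -> t \in D2.
  move=> t hte ht1; have := in_setT t; rewrite -hU !inE (negbTE hte) (negbTE ht1).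
  by rewrite orbF.
have nl : forall t, t != e -> rk M [set t] = 1 by move=> t hte; exact: conn_nonloop hcon hte.
have nD X : is_circuit M X -> e \notin X -> exists2 d, d \in X & 2 <= #|X|.
  move=> hX heX. have := circ_dep hX => h0.
  have /card_gt0P [d hd] : 0 < #|X| by lia.
  exists d => //. have [_ h] := circ_rm hX hd.
  have hde : d != e by apply/eqP => h'; subst; rewrite hd in heX.
  have := rk_mono M (_ : [set d] \subset X). rewrite sub1set nl // => /(_ hd). lia.
have [d1 hd1 n1] := nD _ hc1 he1.
have [d2 hd2 n2] := nD _ hc2 he2.
have hdis : forall t, t \in D1 -> t \notin D2.
  move=> t ht1; apply/negP => ht2.
  have hte : t != e by apply/eqP => h; subst; rewrite ht1 in he1.
  have := rk_submod M D1 D2. rewrite -hsk.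
  have := rk_mono M (_ : [set t] \subset D1 :&: D2). rewrite sub1set inE ht1 ht2 nl //.
  move=> /(_ isT). lia.
have hd1e : d1 != e by apply/eqP => h; subst; rewrite hd1 in he1.
have [C [hC hd1C heC]] := hcon d1 e hd1e.
have hrE : rk M setT = #|D1| + #|D2| - 2.
  rewrite -(noncoloop hC heC).
  have -> : ~: [set e] = D1 :|: D2.
    apply/setP => t; rewrite !inE. case: (t =P e) => [->|/eqP hte] /=.
      by rewrite (negbTE he1) (negbTE he2).
    case h1: (t \in D1) => //=. by rewrite hcov ?h1.
  rewrite -hsk. have [_ ->] := circ_rm hc1 hd1. have [_ ->] := circ_rm hc2 hd2. lia.
have cA : forall D, is_circuit M D -> e \notin D -> 
   (exists x z, [/\ x \in D, z \in D, x != z & rk M (~:[set x; z]) < rk M setT]) ->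
   exists C : {set T}, [/\ is_cocircuit M C, #|C| = 2 & e \notin C].
  move=> D hD heD [x [z [hx hz hxz hlt]]].
  exists [set x; z]; split.
  - apply: cocirc2 => //; [exact: noncoloop hD hx | exact: noncoloop hD hz].
  - by rewrite cards2 hxz.
  - rewrite !inE negb_or; apply/andP; split; apply/eqP => h; subst.
      by rewrite hx in heD. by rewrite hz in heD.
case: (classic (exists x z, [/\ x \in D1, z \in D1, x != z & rk M (~:[set x; z]) < rk M setT])) => [h|nA1].
  by left; apply: (cA D1).
case: (classic (exists x z, [/\ x \in D2, z \in D2, x != z & rk M (~:[set x; z]) < rk M setT])) => [h|nA2].
  by left; apply: (cA D2).
right.
have hB (D : {set T}) : ~ (exists x z, [/\ x \in D, z \in D, x != z & rk M (~:[set x; z]) < rk M setT]) ->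
    forall x z, x \in D -> z \in D -> x != z -> rk M (~:[set x; z]) = rk M setT.
  move=> nA x z hx hz hxz. apply/eqP; rewrite eqn_leq rk_mono ?subsetT //=.
  rewrite leqNgt; apply/negP => hlt; apply: nA; by exists x, z.
have S : Setup M D1 D2 e.
  by split => //; [exact: hB _ nA1 | exact: hB _ nA2].
exists #|D1|.+1, #|D2|.+1; split; [lia | lia | exact: iso_main S hd1 hd2].
Qed.
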